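(* Let $\kappa$ be a regular cardinal, $\lambda\le\kappa$, and let $X\subseteq\kappa^\kappa$ be a $(\kappa,\lambda)$-Borel$^*$ set. Then there is a $\kappa$-closed set $C\subseteq\kappa^\kappa\times\kappa^\kappa$ such that $X=\{\xi\mid\exists\eta\,(\xi,\eta)\in C\}$.
   Context: Basic $\kappa$-open sets: $N_\eta=\{\zeta\in\kappa^\kappa\mid\eta\subseteq\zeta\}$ for $\eta:X\to\kappa$, $X\subseteq\kappa$, $|X|<\kappa$, and $\emptyset$; in $\kappa^\kappa\times\kappa^\kappa$ they are products $N_\eta\times N_\xi$. A set is $\kappa$-open if it is a union of at most $\kappa$ basic $\kappa$-open sets, $\kappa$-closed if its complement is $\kappa$-open; $\kappa$-Borel sets form the smallest class containing the basic $\kappa$-open sets closed under complements and unions and intersections of at most $\kappa$ sets. A good labelled $(\kappa,\lambda)$-tree is a pair $(T,L)$ where $T$ is a (rooted) tree without branches of length $\kappa$, every element has at most $\kappa$ immediate successors, $|T|\le\lambda$, every increasing sequence in $T$ has a supremum in $T$, $L(t)\in\{\bigcup,\bigcap\}$ for non-leaves $t$, and $L(t)$ is a basic $\kappa$-open set for leaves $t$. Borel$^*$-game $GB(\xi,(T,L))$: the play starts at the root; at a non-leaf $t$, II chooses an immediate successor if $L(t)=\bigcup$, I chooses if $L(t)=\bigcap$; at limits the play moves to the supremum; the play ends at a leaf $t$ and II wins iff $\xi\in L(t)$. $(T,L)$ is a $(\kappa,\lambda)$-Borel$^*$-code if it is a good labelled $(\kappa,\lambda)$-tree and there is $\pi$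 with: (i) $\mathrm{dom}(\pi)$ a $\kappa$-closed subset of $\kappa^\kappa$ and each $\pi(\eta)$ a strategy of II; (ii) whenever II has a winning strategy in $GB(\xi,(T,L))$, some $\pi(\eta)$ is one; (iii) $\{(\xi,\eta)\mid\eta\in\mathrm{dom}(\pi),\ \pi(\eta)$ winning for II in $GB(\xi,(T,L))\}$ is $\kappa$-Borel. A set $X\subseteq\kappa^\kappa$ is $(\kappa,\lambda)$-Borel$^*$ if there is a $(\kappa,\lambda)$-Borel$^*$-code $(T,L)$ with $\xi\in X\iff$ II has a winning strategy in $GB(\xi,(T,L))$, for all $\xi\in\kappa^\kappa$. *)

(* Defs.v *)
Set Implicit Arguments.
Unset Strict Implicit.

Definition card_le {T U : Type} (A : T -> Prop) (B : U -> Prop) : Prop :=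
  (forall x, ~ A x) \/
  exists f : T -> U, (forall x, A x -> B (f x)) /\
                     (forall x y, A x -> A y -> f x = f y -> x = y).

Definition card_lt {T U : Type} (A : T -> Prop) (B : U -> Prop) : Prop :=
  card_le A B /\ ~ card_le B A.

Definition full (T : Type) : T -> Prop := fun _ => True.
Arguments full T _ : clear implicits.

Definition regular_cardinal {K : Type} (lt : K -> K -> Prop) : Prop :=
  (forall x, ~ lt x x) /\
  (forall x y z, lt x y -> lt y z -> lt x z) /\
  (forall x y, lt x y \/ x = y \/ lt y x) /\
  (forall A : K -> Prop, (exists x, A x) ->
     exists m, A m /\ forall x, A x -> m = x \/ lt m x) /\
  (exists f : nat -> K, forall n m, f n = f m -> n = m) /\
  (* the order type is a cardinal: proper initial segments are smaller *)
  (forall x, card_lt (fun y => lt y x) (full K)) /\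
  (* regularity: every subset of size < kappa is bounded *)
  (forall A : K -> Prop, card_lt A (full K) -> exists b, forall a, A a -> lt a b).

Definition ksmall {K T : Type} (A : T -> Prop) : Prop := card_lt A (full K).

Definition baire (K : Type) := K -> K.

(* basic kappa-open sets N_eta (eta : X -> K, |X| < kappa), and the empty set *)
Definition kbasic {K : Type} (A : baire K -> Prop) : Prop :=
  (forall z, ~ A z) \/
  exists (X : K -> Prop) (g : K -> K), @ksmall K K X /\
    forall z, A z <-> (forall x, X x -> z x = g x).

Definition kbasic2 {K : Type} (A : baire K * baire K -> Prop) : Prop :=
  exists B1 B2, kbasic B1 /\ kbasic B2 /\ forall p, A p <-> (B1 (fst p) /\ B2 (snd p)).

(* kappa-open: union of at most kappa basic sets (indexed by K, repetitions allowed) *)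
Definition kopen {K S : Type} (basic : (S -> Prop) -> Prop) (A : S -> Prop) : Prop :=
  exists F : K -> S -> Prop, (forall i, basic (F i)) /\
    forall p, A p <-> exists i, F i p.

Definition kclosed {K S : Type} (basic : (S -> Prop) -> Prop) (A : S -> Prop) : Prop :=
  @kopen K S basic (fun p => ~ A p).

Inductive kBorel {K S : Type} (basic : (S -> Prop) -> Prop) : (S -> Prop) -> Prop :=
| kB_basic A : basic A -> kBorel basic A
| kB_compl A : kBorel basic A -> kBorel basic (fun p => ~ A p)
| kB_union (F : K -> S -> Prop) : (forall i, kBorel basic (F i)) ->
    kBorel basic (fun p => exists i, F i p)
| kB_inter (F : K -> S -> Prop) : (forall i, kBorel basic (F i)) ->
    kBorel basic (fun p => forall i, F i p)
| kB_ext A B : kBorel basic A -> (forall p, A p <-> B p) -> kBorel basic B.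

Inductive label (K : Type) :=
| LUnion : label K
| LInter : label K
| LLeaf : (baire K -> Prop) -> label K.
Arguments LUnion {K}.
Arguments LInter {K}.

Section Trees.
Variables (K L Node : Type) (lt : K -> K -> Prop)
          (tlt : Node -> Node -> Prop) (lab : Node -> label K).

Definition tle (x y : Node) : Prop := x = y \/ tlt x y.
Definition imm_succ (t s : Node) : Prop :=
  tlt t s /\ ~ exists u, tlt t u /\ tlt u s.
Definition is_leaf (t : Node) : Prop := ~ exists s, tlt t s.
Definition tchain (C : Node -> Prop) : Prop :=
  forall x y, C x -> C y -> x = y \/ tlt x y \/ tlt y x.

Record good_tree : Prop := {
  gt_irrefl : forall x, ~ tlt x x;
  gt_trans : forall x y z, tlt x y -> tlt y z -> tlt x z;
  gt_root : exists r, forall t, tle r t;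
  gt_pred_total : forall t, tchain (fun x => tlt x t);
  gt_pred_wf : forall t (A : Node -> Prop), (forall x, A x -> tlt x t) ->
      (exists x, A x) -> exists m, A m /\ forall x, A x -> tle m x;
  gt_no_kbranch : ~ exists f : K -> Node, forall i j, lt i j -> tlt (f i) (f j);
  gt_succ_card : forall t, card_le (imm_succ t) (full K);
  gt_size : card_le (full Node) (full L);
  gt_sup : forall C, tchain C -> (exists x, C x) ->
      exists s, (forall x, C x -> tle x s) /\
                forall u, (forall x, C x -> tle x u) -> tle s u;
  gt_lab_leaf : forall t, is_leaf t -> exists A, lab t = LLeaf A /\ kbasic A;
  gt_lab_node : forall t, ~ is_leaf t -> lab t = LUnion \/ lab t = LInter
}.

(* Strategies of II, as functions of the current position (the history of a
   play in a tree is determined by its current node): at a non-leaf node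
   labelled Union, II moves to an immediate successor. *)
Definition strategyII (sigma : Node -> Node) : Prop :=
  forall t, lab t = LUnion -> ~ is_leaf t -> imm_succ t (sigma t).

Definition consistent (sigma : Node -> Node) (t : Node) : Prop :=
  forall s, tlt s t -> lab s = LUnion -> tle (sigma s) t.

Definition winningII (sigma : Node -> Node) (xi : baire K) : Prop :=
  forall t, is_leaf t -> consistent sigma t ->
    exists A, lab t = LLeaf A /\ A xi.

Definition II_has_ws (xi : baire K) : Prop :=
  exists sigma, strategyII sigma /\ winningII sigma xi.

Definition BorelStar_code : Prop :=
  good_tree /\
  exists (D : baire K -> Prop) (pi : baire K -> Node -> Node),
    @kclosed K (baire K) kbasic D /\
    (forall eta, D eta -> strategyII (pi eta)) /\
    (forall xi, II_has_ws xi -> exists eta, D eta /\ winningII (pi eta) xi) /\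
    @kBorel K (baire K * baire K) kbasic2
      (fun p => D (snd p) /\ winningII (pi (snd p)) (fst p)).
End Trees.

(* X is (kappa,lambda)-Borel^*, lambda given as (the cardinality of) the type L *)
Definition BorelStar {K : Type} (lt : K -> K -> Prop) (L : Type)
  (X : baire K -> Prop) : Prop :=
  exists (Node : Type) (tlt : Node -> Node -> Prop) (lab : Node -> label K),
    BorelStar_code L lt tlt lab /\
    forall xi, X xi <-> II_has_ws tlt lab xi.

(* Main.v *)
Require Import Defs.
From Stdlib Require Import Classical ClassicalEpsilon FunctionalExtensionality.

Definition small (K : Type) {T : Type} (A : T -> Prop) : Prop := ~ card_le (full K) A.

Lemma small_inj {K T U} (A : T -> Prop) (B : U -> Prop) (h : T -> U) :
  (forall x, A x -> B (h x)) -> (forall x y, A x -> A y -> h x = h y -> x = y) ->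
  small K B -> small K A.
Proof.
  intros HA Hi HB [H|[g [Hg1 Hg2]]]; apply HB.
  - left; intros x _; exact (H x I).
  - right; exists (fun k => h (g k)); split.
    + intros x _; apply HA, Hg1; exact I.
    + intros x y _ _ E; apply Hg2; try exact I; apply Hi; auto; apply Hg1; exact I.
Qed.

Lemma small_sub {K T} (A B : T -> Prop) : (forall x, A x -> B x) -> small K B -> small K A.
Proof. intros H; apply (small_inj A B (fun x => x)); auto. Qed.

Lemma get_inj {K T} (A : T -> Prop) (k0 : K) : card_le (full K) A ->
  exists g : K -> T, (forall x, A (g x)) /\ (forall x y, g x = g y -> x = y).
Proof.
  intros [H|[g [H1 H2]]]. - destruct (H k0 I). - exists g; split; intros; [apply H1|apply H2]; auto; exact I.
Qed.

Lemma card_le_id {K} (A : K -> Prop) : card_le A (full K).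
Proof. right; exists (fun x => x); split; [intros; exact I| auto]. Qed.

Lemma regK {K} {lt : K -> K -> Prop} (hK : regular_cardinal lt) (A : K -> Prop) :
  small K A -> exists b, forall a, A a -> lt a b.
Proof.
  intros H. destruct hK as (_&_&_&_&_&_&R). apply R. split; [apply card_le_id| exact H].
Qed.

Lemma seg_small {K} {lt : K -> K -> Prop} (hK : regular_cardinal lt) x :
  small K (fun y => lt y x).
Proof. destruct hK as (_&_&_&_&_&S&_). apply (S x). Qed.

Lemma K_two {K} {lt : K -> K -> Prop} (hK : regular_cardinal lt) :
  exists k0 k1 : K, k0 <> k1.
Proof.
  destruct hK as (_&_&_&_&[f Hf]&_). exists (f 0), (f 1). intros E; apply Hf in E; discriminate.
Qed.

Lemma small_single {K T} {lt : K -> K -> Prop} (hK : regular_cardinal lt) (a : T) :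
  small K (fun y => y = a).
Proof.
  destruct (K_two hK) as (k0&k1&D). intros H. destruct (get_inj _ k0 H) as (g&G1&G2).
  apply D, G2. rewrite (G1 k0), (G1 k1). reflexivity.
Qed.

Lemma small_union {K T U} {lt : K -> K -> Prop} (hK : regular_cardinal lt)
  (I : T -> Prop) (B : T -> U -> Prop) (Y : U -> Prop) :
  small K I -> (forall j, I j -> small K (B j)) ->
  (forall y, Y y -> exists j, I j /\ B j y) -> small K Y.
Proof.
  intros HI HB HY H.
  destruct (K_two hK) as (k0&_&_).
  destruct (get_inj _ k0 H) as (g&G1&G2).
  pose (jf := fun k => proj1_sig (constructive_indefinite_description _ (HY (g k) (G1 k)))).
  assert (Hj : forall k, I (jf k) /\ B (jf k) (g k)).
  { intros k; unfold jf; destruct (constructive_indefinite_description _ _); exact a. }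
  assert (HF : forall j, I j -> exists b, forall a, jf a = j -> lt a b).
  { intros j Ij. apply (regK hK). intros Hc. destruct (get_inj _ k0 Hc) as (h&H1&H2).
    apply (HB j Ij). right. exists (fun k => g (h k)). split.
    - intros x _. rewrite <- (H1 x). apply Hj.
    - intros x y _ _ E. apply H2, G2, E. }
  pose (bf := fun j => epsilon (inhabits k0) (fun b => forall a, jf a = j -> lt a b)).
  assert (Hb : forall j, I j -> forall a, jf a = j -> lt a (bf j)).
  { intros j Ij. unfold bf. apply epsilon_spec. apply HF, Ij. }
  destruct (regK hK (fun y => exists j, I j /\ bf j = y)) as [M HM].
  { intros Hc. destruct (get_inj _ k0 Hc) as (h&H1&H2).
    apply HI. right.
    exists (fun k => epsilon (inhabits (jf k0)) (fun j => I j /\ bf j = h k)). split.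
    - intros x _. apply (epsilon_spec (inhabits (jf k0)) (fun j => I j /\ bf j = h x)), H1.
    - intros x y _ _ E. apply H2.
      pose proof (epsilon_spec (inhabits (jf k0)) (fun j => I j /\ bf j = h x) (H1 x)) as [_ Ex].
      pose proof (epsilon_spec (inhabits (jf k0)) (fun j => I j /\ bf j = h y) (H1 y)) as [_ Ey].
      rewrite <- Ex, <- Ey, E. reflexivity. }
  destruct hK as (Irr&Tr&_).
  apply (Irr M). apply Tr with (bf (jf M)).
  - apply Hb; [apply Hj| reflexivity].
  - apply HM. exists (jf M); split; [apply Hj|reflexivity].
Qed.

Lemma wf_of_min {T} (R : T -> T -> Prop) :
  (forall A : T -> Prop, (exists x, A x) -> exists m, A m /\ forall y, A y -> ~ R y m) ->
  well_founded R.
Proof.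
  intros H x. apply NNPP; intros Hx.
  destruct (H (fun y => ~ Acc R y)) as (m&Hm&Hmin); [eauto|].
  apply Hm. constructor. intros y Hy. apply NNPP. intros Hn. exact (Hmin y Hn Hy).
Qed.

Lemma K_min {K} {lt : K -> K -> Prop} (hK : regular_cardinal lt) (A : K -> Prop) :
  (exists x, A x) -> exists m, A m /\ forall y, A y -> ~ lt y m.
Proof.
  intros H. destruct hK as (Irr&Tr&_&Mn&_).
  destruct (Mn A H) as (m&Am&Hm). exists m; split; auto.
  intros y Ay Hy. destruct (Hm y Ay) as [<-|E]; eapply Irr; eauto.
Qed.

Lemma lt_wf {K} {lt : K -> K -> Prop} (hK : regular_cardinal lt) : well_founded lt.
Proof. apply wf_of_min. apply (K_min hK). Qed.

Definition mx {K} (lt : K -> K -> Prop) (p : K * K) : K :=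
  if excluded_middle_informative (lt (fst p) (snd p)) then snd p else fst p.

Definition Rp {K} (lt : K -> K -> Prop) (q p : K * K) : Prop :=
  lt (mx lt q) (mx lt p) \/ (mx lt q = mx lt p /\
    (lt (fst q) (fst p) \/ (fst q = fst p /\ lt (snd q) (snd p)))).

Lemma Rp_wf {K} {lt : K -> K -> Prop} (hK : regular_cardinal lt) : well_founded (Rp lt).
Proof.
  apply wf_of_min. intros A [x Ax].
  destruct (K_min hK (fun m => exists q, A q /\ mx lt q = m)) as (M&(q1&Aq1&E1)&HM); [eauto|].
  destruct (K_min hK (fun a => exists q, A q /\ mx lt q = M /\ fst q = a)) as (a1&(q2&Aq2&E2&E2')&Ha1); [eauto|].
  destruct (K_min hK (fun b => A (a1, b) /\ mx lt (a1, b) = M)) as (a2&(Aq3&E3)&Ha2).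
  { exists (snd q2). destruct q2; simpl in *; subst; auto. }
  exists (a1, a2); split; auto.
  intros y Ay [Hy|[Ey Hy]]; simpl in *.
  - rewrite E3 in Hy. eapply HM; eauto.
  - rewrite E3 in Ey. destruct Hy as [Hy|[Ey2 Hy]].
    + eapply Ha1; eauto.
    + apply (Ha2 (snd y)); auto. destruct y; simpl in *; subst; auto.
Qed.

Lemma Rp_total {K} {lt : K -> K -> Prop} (hK : regular_cardinal lt) p q :
  p = q \/ Rp lt p q \/ Rp lt q p.
Proof.
  destruct hK as (_&_&Tri&_).
  unfold Rp. destruct (Tri (mx lt p) (mx lt q)) as [H|[H|H]]; [tauto| |tauto].
  pose proof (eq_sym H).
  destruct (Tri (fst p) (fst q)) as [H1|[H1|H1]]; [tauto| |tauto].
  pose proof (eq_sym H1).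
  destruct (Tri (snd p) (snd q)) as [H3|[H3|H3]]; [tauto| |tauto].
  left. destruct p, q; simpl in *; subst; auto.
Qed.

Lemma mx_ge {K} {lt : K -> K -> Prop} (hK : regular_cardinal lt) p :
  (fst p = mx lt p \/ lt (fst p) (mx lt p)) /\ (snd p = mx lt p \/ lt (snd p) (mx lt p)).
Proof.
  destruct hK as (_&_&Tri&_).
  unfold mx. destruct (excluded_middle_informative _) as [H|H]; split; auto.
  destruct (Tri (fst p) (snd p)) as [H1|[H1|H1]]; [tauto| |tauto]. left; auto.
Qed.

Lemma K_unbounded {K} {lt : K -> K -> Prop} (hK : regular_cardinal lt) m :
  exists b, lt m b.
Proof.
  destruct (regK hK (fun y => y = m)) as [b Hb]. apply (small_single hK).
  exists b; auto.
Qed.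

Lemma Rp_pred_small {K} {lt : K -> K -> Prop} (hK : regular_cardinal lt) p :
  small K (fun q => Rp lt q p).
Proof.
  destruct (K_unbounded hK (mx lt p)) as [b Hb].
  pose proof hK as (Irr&Tr&_).
  assert (Hle : forall q, Rp lt q p -> lt (fst q) b /\ lt (snd q) b).
  { intros q Hq. assert (Hm : lt (mx lt q) b).
    { destruct Hq as [H|[H _]]; [eauto| rewrite H; auto]. }
    destruct (mx_ge hK q) as [[E1|E1] [E2|E2]]; split; try rewrite E1; try rewrite E2; eauto. }
  apply (small_sub _ (fun q => lt (fst q) b /\ lt (snd q) b)); [exact Hle|].
  apply (small_union hK (fun a => lt a b) (fun a q => fst q = a /\ lt (snd q) b)).
  - apply (seg_small hK).
  - intros j _. apply (small_inj _ (fun y => lt y b) snd).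
    + intros x [_ H]; exact H.
    + intros [x1 x2] [y1 y2] [E1 _] [E2 _] E; simpl in *; subst; auto.
    + apply (seg_small hK).
  - intros q [H1 H2]. exists (fst q); auto.
Qed.

Lemma pairing {K} {lt : K -> K -> Prop} (hK : regular_cardinal lt) :
  exists pr : K * K -> K, forall p q, pr p = pr q -> p = q.
Proof.
  destruct (K_two hK) as (k0&_&_).
  pose (Fn := fun (p : K * K) (rec : forall q, Rp lt q p -> K) =>
     epsilon (inhabits k0) (fun k => forall q (h : Rp lt q p), rec q h <> k)).
  pose (pr := Fix (Rp_wf hK) (fun _ => K) Fn).
  assert (Eq : forall p, pr p = Fn p (fun q _ => pr q)).
  { intros p. unfold pr. refine (Fix_eq (Rp_wf hK) (fun _ => K) Fn _ p). intros x f g H. unfold Fn.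
    assert (f = g) as ->; [|reflexivity].
    apply functional_extensionality_dep; intros y. apply functional_extensionality_dep; intros h. apply H. }
  assert (Sp : forall p q, Rp lt q p -> pr q <> pr p).
  { intros p. rewrite (Eq p). unfold Fn.
    apply (epsilon_spec (inhabits k0) (fun k => forall q, Rp lt q p -> pr q <> k)).
    destruct (regK hK (fun k => exists q, Rp lt q p /\ pr q = k)) as [b Hb].
    - intros Hc. destruct (get_inj _ k0 Hc) as (g&G1&G2).
      apply (Rp_pred_small hK p). right.
      exists (fun k => epsilon (inhabits p) (fun q => Rp lt q p /\ pr q = g k)). split.
      + intros x _. apply (epsilon_spec (inhabits p) (fun q => Rp lt q p /\ pr q = g x)), G1.
      + intros x y _ _ E. apply G2.
        pose proof (epsilon_spec (inhabits p) (fun q => Rp lt q p /\ pr q = g x) (G1 x)) as [_ Ex].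
        pose proof (epsilon_spec (inhabits p) (fun q => Rp lt q p /\ pr q = g y) (G1 y)) as [_ Ey].
        rewrite <- Ex, <- Ey, E. reflexivity.
    - exists b. intros q Hq E. pose proof hK as (Irr&_). apply (Irr b).
      rewrite <- E at 1. apply Hb. eauto. }
  exists pr. intros p q E. destruct (Rp_total hK p q) as [H|[H|H]]; auto.
  - destruct (Sp q p H E).
  - destruct (Sp p q H (eq_sym E)).
Qed.

Lemma kopen_ext {K S} (basic : (S -> Prop) -> Prop) (A B : S -> Prop) :
  (forall p, A p <-> B p) -> @kopen K S basic A -> @kopen K S basic B.
Proof.
  intros H (F&H1&H2). exists F; split; auto. intros p; rewrite <- H; auto.
Qed.

Lemma kopen_of_basic {K S} (k0 : K) (basic : (S -> Prop) -> Prop) (A : S -> Prop) :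
  basic A -> @kopen K S basic A.
Proof.
  intros H. exists (fun _ => A); split; auto. intros p; split.
  - intros Ap. exists k0; auto.
  - intros [_ Ap]; auto.
Qed.

Lemma kopen_bigunion {K S T} {lt : K -> K -> Prop} (hK : regular_cardinal lt)
  (basic : (S -> Prop) -> Prop) (bE : basic (fun _ => False))
  (I : T -> Prop) (h : T -> K) (hinj : forall x y, I x -> I y -> h x = h y -> x = y)
  (U : T -> S -> Prop) (hU : forall j, I j -> @kopen K S basic (U j)) :
  @kopen K S basic (fun p => exists j, I j /\ U j p).
Proof.
  destruct (K_two hK) as (k0&_&_).
  destruct (pairing hK) as (pr&Hpr).
  destruct (classic (exists j, I j)) as [[j0 Ij0]|Hn].
  2:{ exists (fun _ _ => False); split; auto. intros p; split.
      - intros (j&Ij&_). exfalso; eauto.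
      - intros [_ []]. }
  pose (FF := fun j => epsilon (inhabits (fun (_ : K) (_ : S) => False))
     (fun F => (forall i, basic (F i)) /\ forall p, U j p <-> exists i, F i p)).
  assert (HFF : forall j, I j -> (forall i, basic (FF j i)) /\ forall p, U j p <-> exists i, FF j i p).
  { intros j Ij. apply (epsilon_spec _ (fun F => (forall i, basic (F i)) /\ forall p, U j p <-> exists i, F i p)).
    apply hU, Ij. }
  pose (unpr := fun k => epsilon (inhabits (k0, k0)) (fun q => pr q = k)).
  assert (Hun : forall q, unpr (pr q) = q).
  { intros q. apply Hpr. apply (epsilon_spec (inhabits (k0,k0)) (fun q' => pr q' = pr q)). eauto. }
  pose (hinv := fun a => epsilon (inhabits j0) (fun j => I j /\ h j = a)).
  assert (Hhinv : forall j, I j -> hinv (h j) = j).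
  { intros j Ij. pose proof (epsilon_spec (inhabits j0) (fun j' => I j' /\ h j' = h j)) as [A B]; eauto. }
  exists (fun k => match unpr k with (a, i) =>
     if excluded_middle_informative (exists j, I j /\ h j = a) then FF (hinv a) i
     else (fun _ => False) end).
  split.
  - intros k. destruct (unpr k) as [a i]. destruct (excluded_middle_informative _) as [(j&Ij&<-)|_]; auto.
    rewrite Hhinv; auto. apply HFF; auto.
  - intros p; split.
    + intros (j&Ij&Ujp). apply HFF in Ujp; auto. destruct Ujp as [i Hi].
      exists (pr (h j, i)). rewrite Hun.
      destruct (excluded_middle_informative _) as [_|C]; [|exfalso; eauto].
      rewrite Hhinv; auto.
    + intros [k Hk]. destruct (unpr k) as [a i].
      destruct (excluded_middle_informative _) as [(j&Ij&<-)|_]; [|destruct Hk].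
      rewrite Hhinv in Hk; auto. exists j; split; auto. apply HFF; eauto.
Qed.

Lemma kopen_union {K S} {lt : K -> K -> Prop} (hK : regular_cardinal lt)
  (basic : (S -> Prop) -> Prop) (bE : basic (fun _ => False)) (U1 U2 : S -> Prop) :
  @kopen K S basic U1 -> @kopen K S basic U2 -> @kopen K S basic (fun p => U1 p \/ U2 p).
Proof.
  intros H1 H2. destruct (K_two hK) as (k0&k1&D).
  apply (kopen_ext _ (fun p => exists b : bool, True /\ (if b then U1 else U2) p)).
  { intros p; split.
    - intros [b [_ H]]; destruct b; auto.
    - intros [H|H]; [exists true|exists false]; auto. }
  apply (kopen_bigunion hK basic bE (fun _ => True) (fun b : bool => if b then k0 else k1)).
  - intros [] [] _ _ E; auto; congruence.
  - intros []; auto.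
Qed.

Lemma ksmall_of_small {K} (A : K -> Prop) : small K A -> @ksmall K K A.
Proof. intros H; split; [apply card_le_id| exact H]. Qed.

Lemma kbasic_empty {K} : @kbasic K (fun _ => False).
Proof. left; auto. Qed.

Lemma kbasic_full {K} {lt : K -> K -> Prop} (hK : regular_cardinal lt) : @kbasic K (fun _ => True).
Proof.
  right. exists (fun _ => False), (fun x => x). split.
  - apply ksmall_of_small. destruct (K_two hK) as (k0&_&_). intros H.
    destruct (get_inj _ k0 H) as (g&G&_). apply (G k0).
  - intros z; split; auto. intros _ x [].
Qed.

Lemma kbasic_coord {K} {lt : K -> K -> Prop} (hK : regular_cardinal lt) (x v : K) :
  @kbasic K (fun z => z x = v).
Proof.
  right. exists (fun y => y = x), (fun _ => v). split.
  - apply ksmall_of_small, (small_single hK).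
  - intros z; split.
    + intros E y ->; auto.
    + intros H; apply H; auto.
Qed.

Lemma kbasic_compl {K} {lt : K -> K -> Prop} (hK : regular_cardinal lt) (A : baire K -> Prop) :
  kbasic A -> @kopen K _ kbasic (fun z => ~ A z).
Proof.
  destruct (K_two hK) as (k0&_&_).
  intros [H|(X&g&_&H)].
  - apply (kopen_ext _ (fun _ => True)); [intros p; split; auto|].
    apply (kopen_of_basic k0), (kbasic_full hK).
  - destruct (pairing hK) as (pr&Hpr).
    apply (kopen_ext _ (fun z => exists q, (X (fst q) /\ snd q <> g (fst q)) /\ z (fst q) = snd q)).
    + intros z. rewrite H. split.
      * intros ((x,v)&(Xx&Hv)&E). simpl in *. intros Hz. apply Hv. rewrite <- E. auto.
      * intros Hn. apply not_all_ex_not in Hn as [x Hx]. apply imply_to_and in Hx as [Xx Hx].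
        exists (x, z x); simpl; auto.
    + apply (kopen_bigunion hK kbasic kbasic_empty _ pr).
      * intros; auto.
      * intros q _. apply (kopen_of_basic k0), (kbasic_coord hK).
Qed.

Lemma kbasic2_empty {K} : @kbasic2 K (fun _ => False).
Proof. exists (fun _ => False), (fun _ => False). split; [left; auto|split; [left; auto|]]. tauto. Qed.

Lemma kopen_prod {K} (U V : baire K -> Prop) :
  @kopen K _ kbasic U -> kbasic V -> @kopen K _ kbasic2 (fun p => U (fst p) /\ V (snd p)).
Proof.
  intros (F&H1&H2) HV. exists (fun i p => F i (fst p) /\ V (snd p)). split.
  - intros i. exists (F i), V. split; auto. split; auto. tauto.
  - intros p. rewrite H2. split.
    + intros ([i Hi]&Hv); eauto.
    + intros [i [Hi Hv]]; eauto.
Qed.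

Lemma small_bool {K} {lt : K -> K -> Prop} (hK : regular_cardinal lt) : small K (full bool).
Proof.
  pose proof hK as (_&_&_&_&[f Hf]&_).
  intros H. destruct (get_inj _ (f 0) H) as (g&_&G).
  assert (D : forall n m, g (f n) = g (f m) -> n = m) by (intros n m E; apply Hf, G, E).
  destruct (g (f 0)) eqn:E0, (g (f 1)) eqn:E1, (g (f 2)) eqn:E2;
  first [ assert (0 = 1) by (apply D; congruence)
        | assert (0 = 2) by (apply D; congruence)
        | assert (1 = 2) by (apply D; congruence) ]; discriminate.
Qed.


Lemma succ_exists {K L Node} {lt : K -> K -> Prop} {tlt : Node -> Node -> Prop} {lab : Node -> label K}
  (G : good_tree L lt tlt lab) s t : tlt s t -> exists u, imm_succ tlt s u /\ tle tlt u t.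
Proof.
  intros Hst. pose proof (gt_irrefl G) as Irr. pose proof (gt_trans G) as Tr.
  destruct (classic (exists x, tlt s x /\ tlt x t)) as [Hx|Hx].
  - destruct (gt_pred_wf G (t:=t) (A:=fun x => tlt s x /\ tlt x t)) as (m&[Hm1 Hm2]&Hmin); [tauto|auto|].
    exists m. split; [split; auto|right; auto].
    intros (v&Hv1&Hv2). destruct (Hmin v) as [E|E]; [split; eauto| subst; eapply Irr; eauto| eapply Irr; eauto].
  - exists t; split; [split; auto|left; auto].
Qed.

Lemma succ_unique {K L Node} {lt : K -> K -> Prop} {tlt : Node -> Node -> Prop} {lab : Node -> label K}
  (G : good_tree L lt tlt lab) s t u u' :
  imm_succ tlt s u -> imm_succ tlt s u' -> tle tlt u t -> tle tlt u' t -> u = u'.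
Proof.
  intros [H1 H1'] [H2 H2'] [E|E] [E'|E']; subst; auto.
  - destruct H1'. eauto.
  - destruct H2'. eauto.
  - destruct (gt_pred_total G E E') as [X|[X|X]]; auto.
    + destruct H2'; eauto.
    + destruct H1'; eauto.
Qed.

Lemma small_tle {K Node} {lt : K -> K -> Prop} {tlt : Node -> Node -> Prop}
  (hK : regular_cardinal lt) s :
  small K (fun x => tlt x s) -> small K (fun x => tle tlt x s).
Proof.
  intros H. apply (small_union hK (full bool) (fun (b : bool) x => if b then tlt x s else x = s)).
  - apply (small_bool hK).
  - intros [] _; auto. apply (small_single hK).
  - intros x [E|E]; [exists false|exists true]; split; auto; exact I.
Qed.

Lemma pred_small {K L Node} {lt : K -> K -> Prop} {tlt : Node -> Node -> Prop} {lab : Node -> label K}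
  (hK : regular_cardinal lt) (G : good_tree L lt tlt lab) t : small K (fun s => tlt s t).
Proof.
  pose proof (gt_irrefl G) as Irr. pose proof (gt_trans G) as Tr.
  apply NNPP; intros Ht.
  assert (Hu : exists u, ~ small K (fun s => tlt s u) /\ forall s, tlt s u -> small K (fun x => tlt x s)).
  { destruct (classic (exists x, tlt x t /\ ~ small K (fun s => tlt s x))) as [Hx|Hx].
    - destruct (gt_pred_wf G (t:=t) (A:=fun x => tlt x t /\ ~ small K (fun s => tlt s x))) as (m&[Hm1 Hm2]&Hmin); [tauto|auto|].
      exists m; split; auto. intros s Hs. apply NNPP; intros Hn.
      destruct (Hmin s) as [E|E]; [split; eauto| subst; eapply Irr; eauto| eapply Irr; eauto].
    - exists t; split; auto. intros s Hs; apply NNPP; intros Hn; apply Hx; eauto. }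
  destruct Hu as (u&Hu&Hsm).
  pose (Fn := fun (i : K) (rec : forall j, lt j i -> Node) =>
     epsilon (inhabits u) (fun x => tlt x u /\ forall j (h : lt j i), tlt (rec j h) x)).
  pose (f := Fix (lt_wf hK) (fun _ => Node) Fn).
  assert (Eq : forall i, f i = Fn i (fun j _ => f j)).
  { intros i. unfold f. refine (Fix_eq (lt_wf hK) (fun _ => Node) Fn _ i). intros x f1 g H. unfold Fn.
    assert (f1 = g) as ->; [|reflexivity].
    apply functional_extensionality_dep; intros y. apply functional_extensionality_dep; intros h. apply H. }
  assert (Cl : forall i, tlt (f i) u /\ forall j, lt j i -> tlt (f j) (f i)).
  { intros i. induction i as [i IH] using (well_founded_ind (lt_wf hK)).
    rewrite (Eq i). unfold Fn.
    apply (epsilon_spec (inhabits u) (fun x => tlt x u /\ forall j, lt j i -> tlt (f j) x)).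
    apply NNPP; intros Hno. apply Hu.
    apply (small_union hK (fun j => lt j i) (fun j x => tle tlt x (f j))).
    - apply (seg_small hK).
    - intros j Hj. apply (small_tle hK). apply Hsm, (IH j Hj).
    - intros x Hx. apply NNPP; intros Hn. apply Hno. exists x; split; auto. intros j Hj.
      destruct (gt_pred_total G (t:=u) (x:=x) (y:=f j) Hx (proj1 (IH j Hj))) as [E|[E|E]]; auto.
      + exfalso; apply Hn; exists j; split; auto; left; auto.
      + exfalso; apply Hn; exists j; split; auto; right; auto. }
  apply (gt_no_kbranch G). exists f. intros i j Hij. apply (Cl j); auto.
Qed.

Theorem corollary3p5 (K : Type) (lt : K -> K -> Prop) (L : Type)
  (hK : regular_cardinal lt) (hL : card_le (full L) (full K))
  (X : baire K -> Prop) (hX : BorelStar lt L X) :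
  exists C : baire K * baire K -> Prop,
    @kclosed K (baire K * baire K) kbasic2 C /\
    forall xi, X xi <-> exists eta, C (xi, eta).
Proof.
  destruct hX as (Node & tlt & lab & [G _] & HX).
  destruct (gt_root G) as [r _].
  destruct (K_two hK) as (k0&_&_).
  destruct (pairing hK) as (pr&Hpr).
  destruct (gt_size G) as [H|(e1&_&E1)]; [destruct (H r I)|].
  destruct hL as [H|(e2&_&E2)]; [destruct (H (e1 r) I)|].
  pose (e := fun t => e2 (e1 t)).
  assert (einj : forall x y, e x = e y -> x = y).
  { intros x y E. apply E1; try exact I. apply E2; try exact I. exact E. }
  pose (einv := fun k => epsilon (inhabits r) (fun t => e t = k)).
  assert (Heinv : forall t, einv (e t) = t).
  { intros t. apply einj. apply (epsilon_spec (inhabits r) (fun t' => e t' = e t)). eauto. }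
  pose (Valid := fun (eta : baire K) => forall s, lab s = LUnion -> ~ is_leaf tlt s ->
                   exists u, imm_succ tlt s u /\ eta (e s) = e u).
  pose (Cons := fun (eta : baire K) t => forall s, tlt s t -> lab s = LUnion ->
                   exists u, eta (e s) = e u /\ tle tlt u t).
  pose (labset := fun t => match lab t with LLeaf A => A | _ => fun _ => True end).
  pose (Dt := fun t k => exists s, tlt s t /\ lab s = LUnion /\ e s = k).
  pose (gt := fun t k => epsilon (inhabits k0) (fun v => exists s u, e s = k /\ tlt s t /\
                 imm_succ tlt s u /\ tle tlt u t /\ v = e u)).
  pose (Nt := fun t (eta : baire K) => forall k, Dt t k -> eta k = gt t k).
  assert (gspec : forall s t, tlt s t -> exists u, imm_succ tlt s u /\ tle tlt u t /\ gt t (e s) = e u).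
  { intros s t Hst. destruct (succ_exists G s t Hst) as (u0&Hu0&Hu0t).
    destruct (epsilon_spec (inhabits k0) (fun v => exists s' u, e s' = e s /\ tlt s' t /\
                 imm_succ tlt s' u /\ tle tlt u t /\ v = e u)) as (s'&u&Es&_&Hi&Hut&Ev).
    { exists (e u0), s, u0; auto. }
    apply einj in Es. subst s'. exists u; split; auto. }
  exists (fun p => Valid (snd p) /\ forall t, is_leaf tlt t -> Cons (snd p) t ->
                      exists A, lab t = LLeaf A /\ A (fst p)).
  split.
  - unfold kclosed.
    apply (kopen_ext _ (fun p =>
       (exists q : Node * K, (lab (fst q) = LUnion /\ ~ is_leaf tlt (fst q) /\
            ~ exists u, imm_succ tlt (fst q) u /\ e u = snd q) /\ snd p (e (fst q)) = snd q)
       \/ exists t, is_leaf tlt t /\ (~ labset t (fst p) /\ Nt t (snd p)))).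
    + intros [xi eta]; simpl. split.
      * intros [((s,v)&(H1&H2&H3)&E)|(t&Ht&nA&HN)] [V HC]; simpl in *.
        -- destruct (V s H1 H2) as (u&Hi&Eu). apply H3. exists u; split; auto. congruence.
        -- assert (Hc : Cons eta t).
           { intros s Hs Hu. destruct (gspec s t Hs) as (u'&Hu'&Hu't&Eg). exists u'. split; auto.
             rewrite <- Eg. apply HN. exists s; auto. }
           destruct (HC t Ht Hc) as (A&EA&HA). unfold labset in nA. rewrite EA in nA. auto.
      * intros nC. destruct (classic (Valid eta)) as [V|nV].
        -- right. apply NNPP; intros H. apply nC. split; auto. intros t Ht Hc.
           destruct (gt_lab_leaf G Ht) as (A&EA&_). exists A; split; auto.
           apply NNPP; intros nA. apply H. exists t. split; auto. split.
           ++ unfold labset; rewrite EA; auto.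
           ++ intros k (s&Hs&Hu&<-). destruct (Hc s Hs Hu) as (u&Eu&Hut).
              destruct (gspec s t Hs) as (u'&Hu'&Hu't&Eg). rewrite Eg, Eu. f_equal.
              assert (Hnl : ~ is_leaf tlt s) by (intros Hl; apply Hl; exists t; auto).
              destruct (V s Hu Hnl) as (u''&Hu''&E'').
              rewrite Eu in E''. apply einj in E''. subst u''.
              apply (succ_unique G s t u u'); auto.
        -- left. apply NNPP; intros H; apply nV. intros s Hs Hl. apply NNPP; intros Hn.
           apply H. exists (s, eta (e s)). simpl. split; auto. split; auto. split; auto.
           intros (u&Hu&E). apply Hn. exists u; split; auto.
    + apply (kopen_union hK kbasic2 kbasic2_empty).
      * apply (kopen_bigunion hK kbasic2 kbasic2_empty _ (fun q => pr (e (fst q), snd q))).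
        -- intros [s v] [s' v'] _ _ E. apply Hpr in E. inversion E. apply einj in H0. subst; auto.
        -- intros [s v] _. apply (kopen_of_basic k0).
           exists (fun _ => True), (fun z => z (e s) = v). split; [apply (kbasic_full hK)|].
           split; [apply (kbasic_coord hK)|]. simpl. tauto.
      * apply (kopen_bigunion hK kbasic2 kbasic2_empty _ e).
        -- intros; auto.
        -- intros t Ht. apply (kopen_prod (fun z => ~ labset t z) (Nt t)).
           ++ apply (kbasic_compl hK). destruct (gt_lab_leaf G Ht) as (A&EA&HA).
              unfold labset; rewrite EA; auto.
           ++ right. exists (Dt t), (gt t). split; [|intros z; unfold Nt; tauto].
              apply ksmall_of_small.
              apply (small_inj (Dt t) (fun s => tlt s t) einv).
              ** intros k (s&Hs&_&<-). rewrite Heinv; auto.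
              ** intros k k' (s&_&_&<-) (s'&_&_&<-) E. rewrite !Heinv in E. subst; auto.
              ** apply (pred_small hK G).
  - intros xi. rewrite HX. unfold II_has_ws. split.
    + intros (sigma&Hs&Hw). exists (fun k => e (sigma (einv k))). simpl. split.
      * intros s Hu Hl. exists (sigma s). split; [apply Hs; auto| rewrite Heinv; auto].
      * intros t Hl Hc. apply Hw; auto. intros s Hst Hu.
        destruct (Hc s Hst Hu) as (u&E&Hut). rewrite Heinv in E. apply einj in E. rewrite E; auto.
    + intros (eta&V&HC). simpl in *. exists (fun s => einv (eta (e s))). split.
      * intros t Hu Hl. destruct (V t Hu Hl) as (u&Hi&E). rewrite E, Heinv; auto.
      * intros t Hl Hc. apply HC; auto. intros s Hs Hu.
        assert (Hnl : ~ is_leaf tlt s) by (intros Hl'; apply Hl'; exists t; auto).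
        destruct (V s Hu Hnl) as (u&Hi&E). exists u; split; auto.
        pose proof (Hc s Hs Hu) as Hc'. simpl in Hc'. rewrite E, Heinv in Hc'. exact Hc'.
Qed.
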